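(* Let $a$ and $b$ be coprime odd integers, let $\beta\geq 0$ be an integer, and let $\gamma$ be a positive integer such that $2^\gamma\,\|\,(a+b)$. Then: 1) If $\gamma<\beta$, then $G_{(a,b)}(\beta)=\emptyset$. 2) If $2\leq\beta\leq\gamma$, then $G_{(a,b)}(\gamma)=\{d\in\mathbb{N} : d=1 \text{ or } d \text{ is odd and } 2\,\|\,\operatorname{ord}_p(\tfrac{a}{b}) \text{ for every prime } p \text{ dividing } d\}$, and for $2\leq\beta<\gamma$, $G_{(a,b)}(\beta)=\bigcup_{i=0}^{\gamma-\beta}\{d2^i : d\in G_{(a,b)}(\gamma)\}=G_{(a,b)}(\beta+1)\cup\{d2^{\gamma-\beta} : d\in G_{(a,b)}(\gamma)\}$. 3) If $\beta\in\{0,1\}$, then $G_{(a,b)}(1)=\{2d : d\in G_{(a,b)}(2)\}\cup\{d\in\mathbb{N} : d=1 \text{ or } d \text{ is odd and there exists } s\geq1 \text{ such that } 2^s\,\|\,\operatorname{ord}_p(\tfrac{a}{b}) \text{ for every prime } p \text{ dividing } d\}$ and $G_{(a,b)}(0)=G_{(a,b)}(1)\cup\{2d : d\in G_{(a,b)}(1)\}$.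
   Context: For coprime nonzero integers $a,b$ and an integer $\beta\geq0$, $G_{(a,b)}(\beta)$ is the set of positive integers $d$ such that $2^\beta d\mid(a^k+b^k)$ for some positive integer $k$. For $n$ coprime to $ab$, $\operatorname{ord}_n(\frac{a}{b})$ denotes the multiplicative order of $ab^{-1}$ modulo $n$ (conditions on $\operatorname{ord}_p(\frac ab)$ presuppose that it is defined). $2^\gamma\,\|\,m$ means $2^\gamma\mid m$ and $2^{\gamma+1}\nmid m$. *)

(* Defs.v *)
From mathcomp Require Import all_boot all_order all_algebra.
Set Implicit Arguments. Unset Strict Implicit. Unset Printing Implicit Defensive.
Import Order.TTheory GRing.Theory Num.Theory.
Local Open Scope ring_scope.

Definition pow2_exact (g : nat) (m : int) : Prop :=
  (((2 ^ g)%N)%:Z %| m)%Z /\ ~ (((2 ^ g.+1)%N)%:Z %| m)%Z.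

Definition G (a b : int) (beta : nat) (d : nat) : Prop :=
  (0 < d)%N /\ exists k : nat, (0 < k)%N /\
     ((((2 ^ beta) * d)%N)%:Z %| a ^+ k + b ^+ k)%Z.

Definition is_mult_order (n : nat) (x : int) (k : nat) : Prop :=
  (0 < k)%N /\ (n%:Z %| x ^+ k - 1)%Z /\
  forall j : nat, (0 < j)%N -> (j < k)%N -> ~ (n%:Z %| x ^+ j - 1)%Z.

(* k = ord_n(a/b): n coprime to ab (so that a b^{-1} mod n is defined) and
   k is the multiplicative order of r, where r represents a b^{-1} mod n,
   i.e. r * b = a (mod n). *)
Definition ord_ab (n : nat) (a b : int) (k : nat) : Prop :=
  coprimez n%:Z (a * b) /\
  exists r : int, (n%:Z %| r * b - a)%Z /\ is_mult_order n r k.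

Definition S_two (a b : int) (d : nat) : Prop :=
  d = 1%N \/ (odd d /\ forall p : nat, prime p -> (p %| d)%N ->
      exists k, ord_ab p a b k /\ pow2_exact 1 k%:Z).

Definition S_three (a b : int) (d : nat) : Prop :=
  d = 1%N \/ (odd d /\ exists s : nat, (1 <= s)%N /\
      forall p : nat, prime p -> (p %| d)%N ->
      exists k, ord_ab p a b k /\ pow2_exact s k%:Z).

(* Main.v *)
Require Import Defs.
From mathcomp Require Import all_boot all_order all_algebra zify ring.
Import Order.TTheory GRing.Theory Num.Theory.
Local Open Scope ring_scope.

Lemma PoszX' (m n : nat) : ((m ^ n)%N)%:Z = m%:Z ^+ n.
Proof. by rewrite -!natz natrX. Qed.

Lemma oddz (x : int) : ~~ (2 %| x)%Z -> exists y, x = 2*y + 1.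
Proof.
move=> h; exists (x %/ 2)%Z.
have := divz_eq x 2; have := modz_ge0 x (isT : (2:int) != 0); have := ltz_pmod x (isT : (0:int) < 2).
have : (x %% 2)%Z != 0 by apply: contra h => /eqP; move/dvdz_mod0P.
lia.
Qed.

Lemma dvd_subXX (x y : int) n : (x - y %| x ^+ n - y ^+ n)%Z.
Proof. by rewrite subrXX dvdz_mulr. Qed.

Lemma dvd_addXX (u v : int) q : odd q -> (u + v %| u ^+ q + v ^+ q)%Z.
Proof.
move=> oq; have := dvd_subXX u (- v) q.
by rewrite opprK exprNn -signr_odd oq expr1 mulN1r opprK.
Qed.

Lemma primez_dvdM (p : nat) (x y : int) : prime p ->
  (p%:Z %| x * y)%Z -> (p%:Z %| x)%Z \/ (p%:Z %| y)%Z.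
Proof.
move=> pp; rewrite !dvdzE abszM /= Euclid_dvdM //; case/orP; auto.
Qed.

Lemma primez_dvdX (p : nat) (x : int) k : prime p ->
  (p%:Z %| x ^+ k)%Z -> (p%:Z %| x)%Z.
Proof.
move=> pp; rewrite !dvdzE abszX /= Euclid_dvdX //; case/andP; auto.
Qed.

Lemma oddzM (x y : int) : ~~ (2 %| x)%Z -> ~~ (2 %| y)%Z -> ~~ (2 %| x * y)%Z.
Proof.
move=> hx hy; apply/negP => /(@primez_dvdM 2 x y isT) [] ?.
  by move/negP: hx. by move/negP: hy.
Qed.

Lemma oddzX (x : int) k : ~~ (2 %| x)%Z -> ~~ (2 %| x ^+ k)%Z.
Proof.
move=> hx; apply/negP => /(@primez_dvdX 2 x k isT); exact/negP.
Qed.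

Lemma lift_p (u v : int) (p : nat) : prime p -> odd p -> (p%:Z %| u + v)%Z ->
  (p%:Z * (u + v) %| u ^+ p + v ^+ p)%Z.
Proof.
move=> pp op hp.
have E := subrXX u (- v) p.
rewrite opprK exprNn -signr_odd op expr1 mulN1r opprK in E.
rewrite E mulrC dvdz_mul //.
set S := (X in (_ %| X)%Z).
have -> : S = \sum_(i < p) (u ^+ (p.-1 - i) * (- v) ^+ i - u ^+ p.-1) + u ^+ p.-1 *+ p.
  by rewrite sumrB sumr_const card_ord subrK.
apply: rpredD; last by rewrite -mulr_natr -natz dvdz_mull.
apply: rpred_sum => i _.
have -> : u ^+ p.-1 = u ^+ (p.-1 - i) * u ^+ i.
  by rewrite -exprD subnK // -ltnS prednK ?prime_gt0.
rewrite -mulrBr dvdz_mull //.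
apply: dvdz_trans (dvd_subXX _ _ _).
by rewrite -opprD rpredN addrC.
Qed.

Lemma dvd_sub1 (x : int) q : (x - 1 %| x ^+ q - 1)%Z.
Proof. by have := dvd_subXX x 1 q; rewrite expr1n. Qed.

Lemma mult_order_dvd (n : nat) (r : int) m j : is_mult_order n r m ->
  (n%:Z %| r ^+ j - 1)%Z = (m %| j)%N.
Proof.
case=> [m0 [hm hmin]]; apply/idP/idP.
- move=> hj.
  have Ej : r ^+ j - 1 = r ^+ (j %% m) * ((r ^+ m) ^+ (j %/ m) - 1) + (r ^+ (j %% m) - 1).
    rewrite {1}(div.divn_eq j m) exprD (mulnC (j %/ m)%N) exprM.
    by move: (r ^+ (j %% m)) ((r ^+ m) ^+ (j %/ m)) => A B; ring.
  have hj' : (n%:Z %| r ^+ (j %% m) - 1)%Z.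
    by move: hj; rewrite Ej (rpredDl _ (dvdz_mull _ (dvdz_trans hm (dvd_sub1 _ _)))).
  case: (posnP (j %% m)) => [h0|pos]; first by rewrite /dvdn h0.
  by case: (hmin _ pos (ltn_pmod j m0)).
- case/dvdnP => q ->; rewrite mulnC exprM.
  exact: dvdz_trans hm (dvd_sub1 _ _).
Qed.

Lemma notdvd_b (a b : int) (p k : nat) : coprimez a b -> prime p -> (0 < k)%N ->
  (p%:Z %| a ^+ k + b ^+ k)%Z -> ~~ (p%:Z %| b)%Z.
Proof.
move=> cab pp k0 hd; apply/negP => pb.
have pa : (p%:Z %| a)%Z.
  apply: (@primez_dvdX p a k pp).
  have -> : a ^+ k = (a ^+ k + b ^+ k) - b ^+ k by rewrite addrK.
  by rewrite rpredB // dvdz_exp.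
have : (p%:Z %| gcdz a b)%Z by rewrite dvdz_gcd pa pb.
rewrite (eqP cab) dvdz1 => p1.
have p1' : p = 1%N := eqP p1.
by rewrite p1' in pp.
Qed.

Lemma ord_from_div (a b : int) (p k : nat) : coprimez a b -> prime p -> odd p ->
  (0 < k)%N -> (p%:Z %| a ^+ k + b ^+ k)%Z ->
  exists m, ord_ab p a b m /\ (m %| 2 * k)%N /\ ~~ (m %| k)%N.
Proof.
move=> cab pp op k0 hd.
have npb := @notdvd_b a b p k cab pp k0 hd.
have npa : ~~ (p%:Z %| a)%Z.
  apply: (@notdvd_b b a p k _ pp k0); [by rewrite coprimez_sym | by rewrite addrC].
have cpb : coprimez p b by rewrite coprimezE prime_coprime.
have cpa : coprimez p a by rewrite coprimezE prime_coprime.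
case/coprimezP: (cpb) => [[u v]] /= Huv.
pose r := a * v.
have hr : (p%:Z %| r * b - a)%Z.
  have E : a * v * b - a = - (a * u) * p%:Z + a * (u * p%:Z + v * b - 1) by ring.
  by rewrite /r E Huv subrr mulr0 addr0 dvdz_mull.
clearbody r.
have hrk : (p%:Z %| r ^+ k + 1)%Z.
  have E : (r ^+ k + 1) * b ^+ k = ((r * b) ^+ k - a ^+ k) + (a ^+ k + b ^+ k).
    by rewrite exprMn; move: (r ^+ k) (b ^+ k) (a ^+ k) => X Y Z; ring.
  have : (p%:Z %| (r ^+ k + 1) * b ^+ k)%Z.
    by rewrite E rpredD // (dvdz_trans hr (dvd_subXX _ _ _)).
  by rewrite (Gauss_dvdzl _ (coprimezXr k cpb)).
pose P := fun j => (0 < j)%N && (p%:Z %| r ^+ j - 1)%Z.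
have ex : exists j, P j.
  exists (2 * k)%N; apply/andP; split; first by rewrite muln_gt0 k0.
  rewrite mulnC exprM.
  have -> : (r ^+ k) ^+ 2 - 1 = (r ^+ k - 1) * (r ^+ k + 1) by move: (r ^+ k) => X; ring.
  exact: dvdz_mull.
case: (ex_minnP ex) => m /andP[m0 hm] hmin.
have mo : is_mult_order p r m.
  split; first by []. split; first by [].
  move=> j j0 jm hj; have := hmin j; rewrite /P j0 hj => /(_ isT).
  by rewrite leqNgt jm.
exists m; split.
  split; first by rewrite coprimezMr cpa.
  by exists r.
split.
  rewrite -(@mult_order_dvd p r m _ mo) mulnC exprM.
  have -> : (r ^+ k) ^+ 2 - 1 = (r ^+ k - 1) * (r ^+ k + 1) by move: (r ^+ k) => X; ring.
  exact: dvdz_mull.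
rewrite -(@mult_order_dvd p r m _ mo); apply/negP => h1.
have : (p%:Z %| (r ^+ k + 1) - (r ^+ k - 1))%Z by rewrite rpredB.
have -> : (r ^+ k + 1) - (r ^+ k - 1) = 2 by move: (r ^+ k) => X; ring.
rewrite dvdzE => /(dvdn_leq (isT : (0 < 2)%N)) h2.
have p2 : p = 2%N.
  by apply/eqP; rewrite eqn_leq prime_gt1 // andbT; exact: h2.
by rewrite p2 in op.
Qed.

Lemma div_from_ord (a b : int) (p m s : nat) : prime p -> ord_ab p a b m ->
  pow2_exact s m%:Z -> (1 <= s)%N ->
  exists q, odd q /\ (p%:Z %| a ^+ (2 ^ s.-1 * q) + b ^+ (2 ^ s.-1 * q))%Z.
Proof.
move=> pp [cp [r [hr [m0 [hm hmin]]]]] [h1 h2] s1.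
rewrite dvdzE /= in h1; rewrite dvdzE /= in h2.
case/dvdnP: h1 => q Eq.
have oq : odd q.
  case oq: (odd q); first by [].
  exfalso; apply: h2; rewrite Eq expnS (mulnC 2) (mulnC q) dvdn_pmul2l.
    by rewrite dvdn2 oq.
  by rewrite expn_gt0.
exists q; split => //.
set t := (2 ^ s.-1 * q)%N.
have mt : m = (t * 2)%N by rewrite Eq /t -(prednK s1) expnS; ring.
have t0 : (0 < t)%N by move: m0; rewrite mt; lia.
have hy : (p%:Z %| (r ^+ t - 1) * (r ^+ t + 1))%Z.
  have -> : (r ^+ t - 1) * (r ^+ t + 1) = r ^+ m - 1.
    by rewrite mt exprM; move: (r ^+ t) => X; ring.
  exact: hm.
case: (@primez_dvdM p _ _ pp hy) => hy'.
  by case: (hmin t t0 _ hy'); rewrite mt; lia.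
have E : a ^+ t + b ^+ t = (a ^+ t - (r * b) ^+ t) + b ^+ t * (r ^+ t + 1).
  by rewrite exprMn; move: (r ^+ t) (b ^+ t) (a ^+ t) => X Y Z; ring.
rewrite E rpredD ?dvdz_mull //.
apply: dvdz_trans (dvd_subXX _ _ _).
by rewrite -opprB rpredN.
Qed.

Lemma two_dvd (a b : int) k : ~~ (2 %| a)%Z -> ~~ (2 %| b)%Z -> (2 %| a ^+ k + b ^+ k)%Z.
Proof.
move=> ha hb.
have [y Ey] := @oddz _ (@oddzX a k ha); have [z Ez] := @oddz _ (@oddzX b k hb).
rewrite Ey Ez.
have -> : 2 * y + 1 + (2 * z + 1) = 2 * (y + z + 1) by ring.
exact: dvdz_mulr (dvdzz _).
Qed.

Lemma v2_even (a b : int) k : ~~ (2 %| a)%Z -> ~~ (2 %| b)%Z -> ~~ odd k ->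
  ~~ (4 %| a ^+ k + b ^+ k)%Z.
Proof.
move=> ha hb ek.
have Ek : k = (k./2 * 2)%N by rewrite -{1}(odd_double_half k) (negbTE ek) add0n muln2.
rewrite Ek !exprM.
have [y Ey] := @oddz _ (@oddzX a k./2 ha); have [z Ez] := @oddz _ (@oddzX b k./2 hb).
rewrite Ey Ez.
have -> : (2 * y + 1) ^+ 2 + (2 * z + 1) ^+ 2 = 4 * (y ^+ 2 + y + z ^+ 2 + z) + 2 by ring.
rewrite (rpredDl _ (dvdz_mulr _ (dvdzz 4))).
by rewrite dvdzE.
Qed.

Lemma v2_odd (a b : int) g k : ~~ (2 %| a)%Z -> ~~ (2 %| b)%Z -> odd k ->
  pow2_exact g (a + b) -> pow2_exact g (a ^+ k + b ^+ k).
Proof.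
move=> ha hb ok [h1 h2].
have E := subrXX a (- b) k.
rewrite opprK exprNn -signr_odd ok expr1 mulN1r opprK in E.
set S := \sum_(i < k) _ in E.
have hbN : ~~ (2 %| - b)%Z by rewrite rpredN.
have oS : ~~ (2 %| S)%Z.
  have ES : S = \sum_(i < k) (a ^+ (k.-1 - i) * (- b) ^+ i - 1) + k%:Z.
    by rewrite /S sumrB sumr_const card_ord -natz subrK.
  rewrite ES (rpredDl _ (rpred_sum _ _)).
    have : ~~ (2 %| k)%N by rewrite dvdn2 ok.
    exact.
  move=> i _.
  have [y Ey] := @oddz _ (@oddzM _ _ (@oddzX a (k.-1 - i) ha) (@oddzX (- b) i hbN)).
  by rewrite Ey addrK dvdz_mulr.
split; first by rewrite E dvdz_mulr.
move=> h; apply: h2.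
case/dvdzP: h1 => c Ec.
rewrite E Ec expnS PoszM mulrAC dvdz_mul2r in h; last by rewrite eqz_nat expn_eq0.
case: (@primez_dvdM 2 c S isT h) => hc.
  by rewrite Ec expnS PoszM dvdz_mul2r ?eqz_nat ?expn_eq0.
by move/negP: oS.
Qed.
Arguments v2_even {a b k}.
Arguments v2_odd {a b g k}.
Arguments two_dvd {a b} k.

Lemma v2_nat (m k v o : nat) : (0 < m)%N -> k = (o * 2 ^ v)%N -> odd o ->
  (m %| 2 * k)%N -> ~~ (m %| k)%N -> pow2_exact v.+1 m%:Z.
Proof.
move=> m0 Ek oo h1 h2.
have [mo cmo Em] := pfactor_coprime (isT : prime 2) m0.
move: Em; set w := logn 2 m => Em.
rewrite coprime2n in cmo.
have E2k : (2 * k = o * 2 ^ v.+1)%N by rewrite Ek expnS; ring.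
rewrite /pow2_exact; change ((2 ^ v.+1 %| m)%N /\ ~ (2 ^ v.+2 %| m)%N).
split.
  case: (leqP w v) => hw.
    exfalso; move/negP: h2; apply.
    rewrite Em Ek dvdn_mul //; last by rewrite dvdn_exp2l.
    have : (mo %| o * 2 ^ v.+1)%N.
      by rewrite -E2k; apply: dvdn_trans h1; rewrite Em dvdn_mulr.
    by rewrite Gauss_dvdl // coprimeXr // coprimen2.
  by rewrite Em dvdn_mull // dvdn_exp2l.
move=> h3.
have : (2 * 2 ^ v.+1 %| o * 2 ^ v.+1)%N by rewrite -expnS -E2k (dvdn_trans h3 h1).
by rewrite dvdn_pmul2r ?expn_gt0 // dvdn2 oo.
Qed.

Lemma decomp2 n : (0 < n)%N -> exists w o, n = (o * 2 ^ w)%N /\ odd o.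
Proof.
move=> n0; have [o co En] := pfactor_coprime (isT : prime 2) n0.
by exists (logn 2 n), o; rewrite -coprime2n.
Qed.

Lemma comb (a b : int) s : (1 <= s)%N -> forall d, odd d ->
  (forall p, prime p -> (p %| d)%N -> exists m, ord_ab p a b m /\ pow2_exact s m%:Z) ->
  exists o, odd o /\ (d%:Z %| a ^+ (2 ^ s.-1 * o) + b ^+ (2 ^ s.-1 * o))%Z.
Proof.
move=> s1 d; elim: d {-2}d (leqnn d) => [|n IH] d hd od hp.
  by move: hd od; rewrite leqn0 => /eqP ->.
have d0 : (0 < d)%N by rewrite lt0n; apply/negP => /eqP d0; rewrite d0 in od.
case: (leqP d 1) => d1.
  have -> : d = 1%N by apply/eqP; rewrite eqn_leq d1 d0.
  by exists 1%N; split; [| exact: dvd1z].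
have pp := pdiv_prime d1.
set p := pdiv d in pp.
have pd : (p %| d)%N := pdiv_dvd d.
set d' := (d %/ p)%N.
have Ed : d = (d' * p)%N by rewrite /d' divnK.
have op : odd p by move: od; rewrite Ed oddM => /andP[].
have od' : odd d' by move: od; rewrite Ed oddM => /andP[].
have ltd : (d' < d)%N by apply: ltn_Pdiv; [exact: prime_gt1 | exact: d0].
have hp' : forall p', prime p' -> (p' %| d')%N -> exists m, ord_ab p' a b m /\ pow2_exact s m%:Z.
  move=> p' pp' h; apply: hp pp' _; rewrite Ed; exact: dvdn_mulr.
have [o' [oo' Hd']] : exists o, odd o /\ (d'%:Z %| a ^+ (2 ^ s.-1 * o) + b ^+ (2 ^ s.-1 * o))%Z.
  apply: IH => //; rewrite -ltnS; exact: leq_trans ltd hd.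
rewrite Ed PoszM.
case: (boolP (p %| d')%N) => pd'.
  exists (o' * p)%N; split; first by rewrite oddM oo' op.
  rewrite mulnA (exprM a) (exprM b).
  move: Hd'; set u := a ^+ _; set v := b ^+ _ => Hd'.
  have pd'z : (p%:Z %| d'%:Z)%Z by rewrite dvdzE; exact: pd'.
  have hpuv : (p%:Z %| u + v)%Z by exact: dvdz_trans pd'z Hd'.
  apply: dvdz_trans (@lift_p u v p pp op hpuv).
  by rewrite [_ * (u + v)]mulrC; exact: (@dvdz_mul _ _ _ _ Hd' (dvdzz _)).
have [m [om pm]] := hp p pp pd.
have [q [oq Hp]] := @div_from_ord a b p m s pp om pm s1.
exists (o' * q)%N; split; first by rewrite oddM oo' oq.
rewrite Gauss_dvdz; last first.
  by rewrite coprimezE coprime_sym prime_coprime.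
apply/andP; split.
  rewrite mulnA (exprM a) (exprM b).
  exact: dvdz_trans Hd' (@dvd_addXX _ _ _ oq).
rewrite (mulnC o') mulnA (exprM a) (exprM b).
exact: dvdz_trans Hp (@dvd_addXX _ _ _ oo').
Qed.

Lemma natdvdz (m n : nat) : (m %| n)%N -> (m%:Z %| n%:Z)%Z.
Proof. move=> h; exact: h. Qed.

Lemma odd_k4 (a b : int) k : ~~ (2 %| a)%Z -> ~~ (2 %| b)%Z ->
  (4 %| a ^+ k + b ^+ k)%Z -> odd k.
Proof.
move=> ha hb h; apply/negPn/negP => ek.
by move/negP: (v2_even ha hb ek); apply.
Qed.

Arguments odd_k4 {a b k}.

Lemma bound_j (a b : int) g k j : ~~ (2 %| a)%Z -> ~~ (2 %| b)%Z -> odd k ->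
  pow2_exact g (a + b) -> ((2 ^ j)%N%:Z %| a ^+ k + b ^+ k)%Z -> (j <= g)%N.
Proof.
move=> ha hb ok pe h; case: (v2_odd ha hb ok pe) => _ h2.
rewrite leqNgt; apply/negP => hj; apply: h2.
apply: dvdz_trans h; apply: natdvdz; exact: dvdn_exp2l.
Qed.

Arguments bound_j {a b g k j}.

Lemma four_dvd (be d : nat) (x : int) : (2 <= be)%N ->
  (((2 ^ be) * d)%N%:Z %| x)%Z -> (4 %| x)%Z.
Proof.
move=> hb h; apply: dvdz_trans h; apply: natdvdz.
apply: dvdn_mulr; change (2 ^ 2 %| 2 ^ be)%N; exact: dvdn_exp2l.
Qed.

Lemma part1 (a b : int) (be g : nat) : ~~ (2 %| a)%Z -> ~~ (2 %| b)%Z ->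
  (0 < g)%N -> pow2_exact g (a + b) -> (g < be)%N -> forall d, ~ G a b be d.
Proof.
move=> ha hb g0 pe gb d [d0 [k [k0 hk]]].
have ok : odd k by apply: (odd_k4 ha hb); apply: (@four_dvd be d) => //; exact: leq_ltn_trans gb.
have : (be <= g)%N.
  apply: (bound_j ha hb ok pe); apply: dvdz_trans hk; apply: natdvdz; exact: dvdn_mulr.
by rewrite leqNgt gb.
Qed.

Lemma part2a (a b : int) (g : nat) : coprimez a b -> ~~ (2 %| a)%Z -> ~~ (2 %| b)%Z ->
  (2 <= g)%N -> pow2_exact g (a + b) -> forall d, G a b g d <-> S_two a b d.
Proof.
move=> cab ha hb g2 pe d; split.
  case=> d0 [k [k0 hk]].
  have ok : odd k by apply: (odd_k4 ha hb); exact: (@four_dvd g d).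
  have pek := v2_odd ha hb ok pe.
  have od : odd d.
    apply/negPn/negP => ed; case: pek => _; apply.
    apply: dvdz_trans hk; apply: natdvdz.
    by rewrite expnS mulnC dvdn_mul // dvdn2.
  right; split => // p pp pd.
  have op : odd p by move: od; rewrite -(divnK pd) oddM => /andP[].
  have hp : (p%:Z %| a ^+ k + b ^+ k)%Z.
    by apply: dvdz_trans hk; apply: natdvdz; exact: dvdn_mull.
  have [m [om [m1 m2]]] := @ord_from_div a b p k cab pp op k0 hp.
  exists m; split => //.
  apply: (@v2_nat m k 0 k) => //; last by rewrite expn0 muln1.
  by case: om => _ [r [_ []]].
case=> [->|[od hp]].
  split => //; exists 1%N; split => //.
  by rewrite muln1 !expr1; case: pe.
have [o [oo Ho]] := @comb a b 1 isT d od hp.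
rewrite expn0 mul1n in Ho.
split; first by rewrite lt0n; apply/negP => /eqP d0; rewrite d0 in od.
exists o; split; first by rewrite lt0n; apply/negP => /eqP o0; rewrite o0 in oo.
rewrite PoszM Gauss_dvdz; last by rewrite coprimezE coprimeXl // coprime2n.
apply/andP; split => //.
by case: (v2_odd ha hb oo pe).
Qed.

Lemma pos_odd (d : nat) : odd d -> (0 < d)%N.
Proof. by rewrite lt0n; apply: contraL => /eqP ->. Qed.

Lemma part2b (a b : int) (be g : nat) : ~~ (2 %| a)%Z -> ~~ (2 %| b)%Z ->
  pow2_exact g (a + b) -> (2 <= be)%N -> (be <= g)%N ->
  forall d, G a b be d <->
    exists i : nat, (i <= g - be)%N /\ exists e : nat, G a b g e /\ d = (e * 2 ^ i)%N.
Proof.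
move=> ha hb pe b2 bg d; split.
  case=> d0 [k [k0 hk]].
  have ok : odd k by apply: (odd_k4 ha hb); exact: (@four_dvd be d).
  have [i [e [Ed oe]]] := @decomp2 d d0.
  exists i; split.
    rewrite leq_subRL // addnC.
    apply: (bound_j ha hb ok pe); apply: dvdz_trans hk; apply: natdvdz.
    by rewrite Ed expnD mulnC dvdn_mul // dvdn_mull.
  exists e; split => //.
  split; first exact: pos_odd.
  exists k; split => //.
  rewrite PoszM Gauss_dvdz; last by rewrite coprimezE coprimeXl // coprime2n.
  apply/andP; split; first by case: (v2_odd ha hb ok pe).
  apply: dvdz_trans hk; apply: natdvdz; rewrite Ed; exact: dvdn_mull (dvdn_mulr _ _).
case=> i [ig [e [[e0 [k [k0 hk]]] ->]]].
split; first by rewrite muln_gt0 e0 expn_gt0.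
exists k; split => //.
apply: dvdz_trans hk; apply: natdvdz.
have -> : (2 ^ be * (e * 2 ^ i) = e * 2 ^ (be + i))%N by rewrite expnD; ring.
rewrite [X in (_ %| X)%N]mulnC dvdn_mul // dvdn_exp2l //.
by rewrite -leq_subRL.
Qed.

Lemma part2c (a b : int) (be g : nat) : ~~ (2 %| a)%Z -> ~~ (2 %| b)%Z ->
  pow2_exact g (a + b) -> (2 <= be)%N -> (be < g)%N ->
  forall d, G a b be d <->
     G a b be.+1 d \/ exists e : nat, G a b g e /\ d = (e * 2 ^ (g - be))%N.
Proof.
move=> ha hb pe b2 bg d.
rewrite (@part2b a b be g ha hb pe b2 (ltnW bg)) (@part2b a b be.+1 g ha hb pe (leqW b2) bg).
split.
  case=> i [ig he].
  case: (ltnP i (g - be)) => hi.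
    by left; exists i; split => //; rewrite subnS -ltnS prednK // subn_gt0.
  have ei : i = (g - be)%N by apply/eqP; rewrite eqn_leq ig hi.
  by right; rewrite -ei.
case=> [[i [ig he]]|he].
  by exists i; split => //; apply: leq_trans ig _; rewrite subnS leq_pred.
by exists (g - be)%N; split.
Qed.

Lemma half_eq (d : nat) : odd d = false -> d = (2 * d./2)%N.
Proof. by move=> od; rewrite mul2n -[d in LHS]odd_double_half od add0n. Qed.

Lemma part3a (a b : int) : coprimez a b -> ~~ (2 %| a)%Z -> ~~ (2 %| b)%Z ->
  forall d : nat, G a b 1 d <->
     (exists e : nat, G a b 2 e /\ d = (2 * e)%N) \/ S_three a b d.
Proof.
move=> cab ha hb d; split.
  case=> d0 [k [k0 hk]].
  case od: (odd d).
    right; right; split => //.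
    have [v [o [Ek oo]]] := @decomp2 k k0.
    exists v.+1; split => // p pp pd.
    have op : odd p by move: od; rewrite -(divnK pd) oddM => /andP[].
    have hp : (p%:Z %| a ^+ k + b ^+ k)%Z.
      by apply: dvdz_trans hk; apply: natdvdz; exact: dvdn_mull.
    have [m [om [m1 m2]]] := @ord_from_div a b p k cab pp op k0 hp.
    exists m; split => //.
    apply: (@v2_nat m k v o) => //.
    by case: om => _ [r [_ []]].
  left; exists d./2; split; last exact: half_eq.
  have Ed := @half_eq d od.
  move: (d./2) Ed => e Ed; subst d.
  split; first by move: d0; rewrite muln_gt0 => /andP[].
  exists k; split => //.
  by move: hk; rewrite mulnA.
case=> [[e [[e0 [k [k0 hk]]] ->]] | hS].
  split; first by rewrite muln_gt0.
  exists k; split => //.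
  by rewrite mulnA.
case: hS => [->| [od [s [s1 hp]]]].
  split => //; exists 1%N; split => //.
  by have := two_dvd 1 ha hb; rewrite !expr1 muln1.
have [o [oo Ho]] := @comb a b s s1 d od hp.
split; first exact: pos_odd.
exists (2 ^ s.-1 * o)%N; split; first by rewrite muln_gt0 expn_gt0 (@pos_odd o oo).
rewrite PoszM Gauss_dvdz; last by rewrite coprimezE coprimeXl // coprime2n.
apply/andP; split => //.
exact: two_dvd.
Qed.

Lemma part3b (a b : int) : ~~ (2 %| a)%Z -> ~~ (2 %| b)%Z ->
  forall d : nat, G a b 0 d <->
     G a b 1 d \/ exists e : nat, G a b 1 e /\ d = (2 * e)%N.
Proof.
move=> ha hb d; split.
  case=> d0 [k [k0 hk]].
  rewrite expn0 mul1n in hk.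
  case od: (odd d).
    left; split => //; exists k; split => //.
    rewrite PoszM Gauss_dvdz; last by rewrite coprimezE coprimeXl // coprime2n.
    by apply/andP; split => //; exact: two_dvd.
  right; exists d./2; split; last exact: half_eq.
  have Ed := @half_eq d od.
  move: (d./2) Ed => e Ed; subst d.
  split; first by move: d0; rewrite muln_gt0 => /andP[].
  exists k; split => //.
case=> [[d0 [k [k0 hk]]] | [e [[e0 [k [k0 hk]]] ->]]].
  split => //; exists k; split => //.
  apply: dvdz_trans hk; apply: natdvdz; rewrite expn0 mul1n; exact: dvdn_mull (dvdnn _).
split; first by rewrite muln_gt0.
exists k; split => //.
by rewrite expn0 mul1n.
Qed.

Theorem theorem2p15 (a b : int) (beta gamma : nat) :
  coprimez a b -> ~~ (2 %| a)%Z -> ~~ (2 %| b)%Z ->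
  (0 < gamma)%N -> pow2_exact gamma (a + b) ->
  ((gamma < beta)%N -> forall d : nat, ~ G a b beta d) /\
  ((2 <= beta)%N -> (beta <= gamma)%N ->
     forall d : nat, G a b gamma d <-> S_two a b d) /\
  ((2 <= beta)%N -> (beta < gamma)%N ->
     (forall d : nat, G a b beta d <->
        exists i : nat, (i <= gamma - beta)%N /\
          exists e : nat, G a b gamma e /\ d = (e * 2 ^ i)%N) /\
     (forall d : nat, G a b beta d <->
        G a b beta.+1 d \/
        exists e : nat, G a b gamma e /\ d = (e * 2 ^ (gamma - beta))%N)) /\
  ((beta = 0%N \/ beta = 1%N) ->
     (forall d : nat, G a b 1 d <->
        (exists e : nat, G a b 2 e /\ d = (2 * e)%N) \/ S_three a b d) /\
     (forall d : nat, G a b 0 d <->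
        G a b 1 d \/ exists e : nat, G a b 1 e /\ d = (2 * e)%N)).
Proof.
move=> cab ha hb g0 pe.
split; first exact: (@part1 a b beta gamma ha hb g0 pe).
split.
  move=> b2 bg; apply: (@part2a a b gamma cab ha hb _ pe); exact: leq_trans b2 bg.
split.
  move=> b2 bg; split.
    exact: (@part2b a b beta gamma ha hb pe b2 (ltnW bg)).
  exact: (@part2c a b beta gamma ha hb pe b2 bg).
move=> _; split.
  exact: (@part3a a b cab ha hb).
exact: (@part3b a b ha hb).
Qed.
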